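(* For every hexagon $X$ of the dappled triangular grid $\mathbf{T}$, the hued graph $X^{-}$ is a retract of the hued graph $\mathbf{T}^{-}$.
   Context: A hued graph is a graph with a proper coloring $\psi:V\to\mathbb{Z}_3$ (hue); a dappled graph is a hued graph with additionally a proper coloring $\varphi:V\to\mathbb{Z}_2^2$ (color). For a dappled graph $G$, $G^{-}$ is the hued graph obtained by forgetting the colors. The dappled triangular grid $\mathbf{T}$ has vertex set $\mathbb{Z}^2$, with $(i_1,j_1)$ and $(i_2,j_2)$ adjacent iff $(i_2-i_1,j_2-j_1)\in\{\pm(1,0),\pm(0,1),\pm(1,1)\}$, hue $(i+j)\bmod 3$ and color $(i\bmod 2,j\bmod 2)$ at $(i,j)$. A hexagon is the dappled subgraph of $\mathbf{T}$ induced by a vertex and its neighbors. A homomorphism of hued graphs maps adjacent vertices to adjacent vertices and preserves hue. A retract of a hued graph $G$ is an induced subgraph $H$ of $G$ for which there exists a retraction, i.e. a homomorphism of hued graphs $f:V(G)\to V(H)$ with $f(v)=v$ for all $v\in V(H)$. *)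

(* Defs.v *)
From Stdlib Require Import ZArith.
Open Scope Z_scope.

Definition vtx := (Z * Z)%type.

Definition adj (u v : vtx) : Prop :=
  let d := (fst v - fst u, snd v - snd u) in
  d = (1, 0) \/ d = (-1, 0) \/ d = (0, 1) \/ d = (0, -1) \/
  d = (1, 1) \/ d = (-1, -1).

(* hue psi(i,j) = (i+j) mod 3 ; colours are forgotten in T^- *)
Definition hue (v : vtx) : Z := (fst v + snd v) mod 3.

Definition in_hexagon (c v : vtx) : Prop := v = c \/ adj c v.

(* f : V(T) -> V(X) is a retraction of hued graphs from T^- onto the
   induced subgraph X^- (X the hexagon centred at c). Since X is induced,
   adjacency in X is adjacency in T. *)
Definition hexagon_retraction (c : vtx) (f : vtx -> vtx) : Prop :=
  (forall v, in_hexagon c (f v)) /\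
  (forall u v, adj u v -> adj (f u) (f v)) /\
  (forall v, hue (f v) = hue v) /\
  (forall v, in_hexagon c v -> f v = v).

(* Main.v *)
Require Import Defs.
From Stdlib Require Import ZArith Lia Bool.
Open Scope Z_scope.

Definition hexb (i j : Z) : bool :=
  (-1 <=? i) && (i <=? 1) && (-1 <=? j) && (j <=? 1) && (-1 <=? i - j) && (i - j <=? 1).

Definition g (i j : Z) : Z * Z :=
  if hexb i j then (i, j) else
  let h := (i + j) mod 3 in
  if h =? 0 then (0, 0)
  else if h =? 1 then (if (i =? -2) && (j =? 0) then (-1, -1) else (1, 0))
  else (if (i =? 0) && (j =? 2) then (1, 1) else (0, -1)).

Definition adjZ (dx dy : Z) : Prop :=
  (dx = 1 /\ dy = 0) \/ (dx = -1 /\ dy = 0) \/ (dx = 0 /\ dy = 1) \/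
  (dx = 0 /\ dy = -1) \/ (dx = 1 /\ dy = 1) \/ (dx = -1 /\ dy = -1).

Lemma adj_iff : forall u v, adj u v <-> adjZ (fst v - fst u) (snd v - snd u).
Proof.
  intros [a b] [c d]; unfold adj, adjZ; simpl.
  split; intro H; repeat destruct H as [H|H]; try (inversion H; lia);
  try (destruct H as [H1 H2]; rewrite H1, H2; tauto).
Qed.

Lemma hexb_iff : forall i j, hexb i j = true <->
  (-1 <= i <= 1 /\ -1 <= j <= 1 /\ -1 <= i - j <= 1).
Proof.
  intros i j; unfold hexb.
  rewrite !andb_true_iff, !Z.leb_le. tauto.
Qed.

Lemma hexb_false : forall i j, hexb i j = false ->
  ~ (-1 <= i <= 1 /\ -1 <= j <= 1 /\ -1 <= i - j <= 1).
Proof.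
  intros i j H H'. apply hexb_iff in H'. congruence.
Qed.

Ltac brk := 
  repeat match goal with
  | |- context [if hexb ?i ?j then _ else _] =>
      let E := fresh in destruct (hexb i j) eqn:E;
      [apply hexb_iff in E | apply hexb_false in E]
  | |- context [if (?x =? ?y) && (?z =? ?w) then _ else _] =>
      let E := fresh in destruct ((x =? y) && (z =? w)) eqn:E;
      [apply andb_true_iff in E; destruct E as [? ?]; 
       repeat match goal with H : (_ =? _) = true |- _ => apply Z.eqb_eq in H end
      | apply andb_false_iff in E;
        destruct E as [E|E]; apply Z.eqb_neq in E]
  | |- context [if ?x =? ?y then _ else _] =>
      let E := fresh in destruct (x =? y) eqn:E;
      [apply Z.eqb_eq in E | apply Z.eqb_neq in E]
  end.

Lemma g_adj : forall a b c d, adjZ (c - a) (d - b) ->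
  adjZ (fst (g c d) - fst (g a b)) (snd (g c d) - snd (g a b)).
Proof.
  intros a b c d H. unfold adjZ in H.
  assert (c = a + (c - a)) as Ec by lia. assert (d = b + (d - b)) as Ed by lia.
  destruct H as [[H1 H2]|[[H1 H2]|[[H1 H2]|[[H1 H2]|[[H1 H2]|[H1 H2]]]]]];
  rewrite H1 in Ec; rewrite H2 in Ed; subst c d; clear H1 H2;
  unfold g; brk; cbn [fst snd]; unfold adjZ in *; try subst; cbn [fst snd] in *; try lia; Z.div_mod_to_equations; lia.

Qed.

Lemma g_hue : forall a b, (fst (g a b) + snd (g a b)) mod 3 = (a + b) mod 3.
Proof.
  intros a b. unfold g. brk; cbn [fst snd]; subst; try reflexivity; Z.div_mod_to_equations; lia.
Qed.

Lemma g_in : forall a b, let p := g a b in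
  (fst p = 0 /\ snd p = 0) \/ adjZ (fst p) (snd p).
Proof.
  intros a b. unfold g. brk; cbn [fst snd]; unfold adjZ; Z.div_mod_to_equations; lia.
Qed.

Lemma g_fix : forall a b, (a = 0 /\ b = 0) \/ adjZ a b -> g a b = (a, b).
Proof.
  intros a b H. unfold g. unfold adjZ in H.
  assert (hexb a b = true) as -> by (apply hexb_iff; lia). reflexivity.
Qed.

Theorem lemma10 : forall c : vtx, exists f : vtx -> vtx, hexagon_retraction c f.
Proof.
  intros [c1 c2].
  exists (fun v => (c1 + fst (g (fst v - c1) (snd v - c2)),
                    c2 + snd (g (fst v - c1) (snd v - c2)))).
  unfold hexagon_retraction, in_hexagon. split; [|split; [|split]].
  - intros [x y]; simpl.
    destruct (g_in (x - c1) (y - c2)) as [[H1 H2]|H].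
    + left. rewrite H1, H2. f_equal; lia.
    + right. apply adj_iff; simpl.
      replace (c1 + fst (g (x - c1) (y - c2)) - c1) with (fst (g (x - c1) (y - c2))) by lia.
      replace (c2 + snd (g (x - c1) (y - c2)) - c2) with (snd (g (x - c1) (y - c2))) by lia.
      exact H.
  - intros [x y] [z w] H. apply adj_iff in H; simpl in H.
    apply adj_iff; simpl.
    pose proof (g_adj (x - c1) (y - c2) (z - c1) (w - c2)) as K.
    assert (E1 : z - c1 - (x - c1) = z - x) by lia.
    assert (E2 : w - c2 - (y - c2) = w - y) by lia.
    rewrite E1, E2 in K. specialize (K H).
    replace (c1 + fst (g (z - c1) (w - c2)) - (c1 + fst (g (x - c1) (y - c2))))
      with (fst (g (z - c1) (w - c2)) - fst (g (x - c1) (y - c2))) by lia.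
    replace (c2 + snd (g (z - c1) (w - c2)) - (c2 + snd (g (x - c1) (y - c2))))
      with (snd (g (z - c1) (w - c2)) - snd (g (x - c1) (y - c2))) by lia.
    exact K.
  - intros [x y]; unfold hue; simpl.
    pose proof (g_hue (x - c1) (y - c2)) as K.
    set (p := fst (g (x - c1) (y - c2))) in *.
    set (q := snd (g (x - c1) (y - c2))) in *.
    clearbody p q. Z.div_mod_to_equations. lia.
  - intros [x y] H. rewrite g_fix.
    + simpl. f_equal; lia.
    + destruct H as [H|H].
      * injection H as -> ->. left; simpl; lia.
      * right. apply adj_iff in H; simpl in *. exact H.
Qed.
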